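(* Let $\beta>0$. For any positive integers $k,m$ there exists $M_{k,m}\in\mathbb{R}$ such that for all positive integers $i_1,\dots,i_k$, \[ \mathbb{E}\left[\frac{\Delta(H_{mi_1})}{(mi_1)^{1/(2+\beta)}}\cdots\frac{\Delta(H_{mi_k})}{(mi_k)^{1/(2+\beta)}}\right]\le M_{k,m}, \] where $\Delta(G)$ denotes the maximum degree of $G$.
   Context: Fix a real $\beta>0$ and a positive integer $m$. The random tree process $(G^n_{1,\beta})_{n\ge1}$ is defined as follows. $G^1_{1,\beta}$ consists of a single vertex $v_1$ and no edges. Given $G^n_{1,\beta}$ with vertices $v_1,\dots,v_n$ and directed edges $e_2,\dots,e_n$ (where $e_i$ is the edge whose tail is $v_i$), $G^{n+1}_{1,\beta}$ is obtained by adding a vertex $v_{n+1}$ and a directed edge $e_{n+1}$ with tail $v_{n+1}$ and head a ''target vertex'' determined by a random variable $f_{n+1}$, independent of $f_2,\dots,f_n$, taking values in $\Omega_{n+1}=\{(i,v):1\le i\le n\}\cup\{(i,h),(i,t):2\le i\le n\}$ with $\Pr(f_{n+1}=(i,v))=\beta/((2+\beta)n-2)$ and $\Pr(f_{n+1}=(i,h))=\Pr(f_{n+1}=(i,t))=1/((2+\beta)n-2)$. If $f_{n+1}=(i,v)$ the target is $v_i$ (chosen ''uniformly''); if $f_{n+1}=(i,h)$ the target is the head of $e_i$, and if $f_{n+1}=(i,t)$ the target is the tail $v_i$ of $e_i$ (chosen ''preferentially'', by copying the head half-edge, resp. tail half-edge, of $e_i$). Consequently the target is $v_i$ with probability $(d_n(v_i)+\beta)/((2+\beta)n-2)$,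 where $d_n(v)$ is the degree of $v$ in $G^n_{1,\beta}$. Each edge is regarded as two half-edges, one at each endpoint; the degree of a vertex is the number of half-edges at it (loops count twice). For $t\ge1$, $H_t$ is the undirected multigraph formed from $G^t_{1,\beta}$ by identifying, for each $j<\lceil t/m\rceil$, the vertices $v_{(j-1)m+1},\dots,v_{jm}$ into one vertex $w_j$, and identifying the remaining vertices into one vertex $w_{\lceil t/m\rceil}$ (all edges kept). Known input (M\'ori): for any positive integer $k$ there exists $\tilde M_k$ such that for all $n$, $\mathbb{E}\big[\big((\Delta(G^n_{1,\beta})+\beta)/n^{1/(2+\beta)}\big)^k\big]\le\tilde M_k$. *)

(* Defs.v *)
From Stdlib Require Export Reals List Arith.
Export ListNotations.
Open Scope R_scope.

(* A value of f_{n+1} in Omega_{n+1}: (i,v), (i,h) or (i,t). *)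
Inductive choice : Type := CV (i : nat) | CH (i : nat) | CT (i : nat).

(* A realisation of f_2, ..., f_t is a list cs with  nth (j-2) cs = f_j.
   Vertices are v_1, v_2, ... indexed by positive naturals. *)
Definition f_at (cs : list choice) (j : nat) : choice := nth (j - 2) cs (CV 0).

(* Index of the head of edge e_j (j >= 2); fuel j suffices since f_j refers to i < j. *)
Fixpoint head_aux (fuel : nat) (cs : list choice) (j : nat) : nat :=
  match fuel with
  | O => O
  | S f => match f_at cs j with
           | CV i => i
           | CT i => i
           | CH i => head_aux f cs i
           end
  end.
Definition head (cs : list choice) (j : nat) : nat := head_aux j cs j.

Definition nsum (l : list nat) : nat := fold_right Nat.add 0%nat l.
Definition nmax (l : list nat) : nat := fold_right Nat.max 0%nat l.
Definition ind (b : bool) : nat := if b then 1%nat else 0%nat.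

(* Degree of v in G^n: half-edges at v (edge e_j has tail v_j and head v_{head j}). *)
Definition degG (cs : list choice) (n v : nat) : nat :=
  nsum (map (fun j => (ind (Nat.eqb j v) + ind (Nat.eqb (head cs j) v))%nat)
            (seq 2 (n - 1))).
Definition DeltaG (cs : list choice) (n : nat) : nat :=
  nmax (map (degG cs n) (seq 1 n)).

(* H_t: vertex v_v (1 <= v <= t) is identified into w_{ceil(v/m)}; for v <= t
   this is exactly the description (blocks of m, remainder into w_{ceil(t/m)}). *)
Definition block (m v : nat) : nat := ((v - 1) / m + 1)%nat.
Definition nblocks (m t : nat) : nat := ((t + m - 1) / m)%nat.
Definition degH (cs : list choice) (m t b : nat) : nat :=
  nsum (map (fun j => (ind (Nat.eqb (block m j) b) + ind (Nat.eqb (block m (head cs j)) b))%nat)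
            (seq 2 (t - 1))).
Definition DeltaH (cs : list choice) (m t : nat) : nat :=
  nmax (map (degH cs m t) (seq 1 (nblocks m t))).

(* Law of f_{n+1} when G^n has n vertices. *)
Definition options (beta : R) (n : nat) : list (choice * R) :=
  let D := (2 + beta) * INR n - 2 in
  map (fun i => (CV i, beta / D)) (seq 1 n) ++
  map (fun i => (CH i, 1 / D)) (seq 2 (n - 1)) ++
  map (fun i => (CT i, 1 / D)) (seq 2 (n - 1)).

Definition rsum (l : list R) : R := fold_right Rplus 0 l.
Definition rprod (l : list R) : R := fold_right Rmult 1 l.

Fixpoint expect_aux (beta : R) (k : nat) (pre : list choice)
         (F : list choice -> R) : R :=
  match k with
  | O => F pre
  | S k' => rsum (map (fun cp => snd cp * expect_aux beta k' (pre ++ [fst cp]) F)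
                      (options beta (S (length pre))))
  end.

Definition expectG (beta : R) (t : nat) (F : list choice -> R) : R :=
  expect_aux beta (t - 1) [] F.

(* Main.v *)
Require Import Defs.
From Stdlib Require Import Reals List Arith Lia Lra.

Definition okc (p : nat) (c : choice) : Prop :=
  match c with
  | CV i => (1 <= i <= p + 1)%nat
  | CH i => (2 <= i <= p + 1)%nat
  | CT i => (2 <= i <= p + 1)%nat
  end.
Definition valid (cs : list choice) : Prop :=
  forall p, (p < length cs)%nat -> okc p (nth p cs (CV 0)).

Lemma valid_nil : valid [].
Proof. intros p H; simpl in H; lia. Qed.

Lemma valid_snoc cs c : valid cs -> okc (length cs) c -> valid (cs ++ [c]).
Proof.
  intros Hv Hc p Hp. rewrite length_app in Hp; simpl in Hp.
  destruct (Nat.eq_dec p (length cs)) as [->|Hne].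
  - rewrite app_nth2 by lia. rewrite Nat.sub_diag. exact Hc.
  - rewrite app_nth1 by lia. apply Hv; lia.
Qed.

Lemma head_aux_app fuel cs e j : valid cs -> (2 <= j <= length cs + 1)%nat ->
  head_aux fuel (cs ++ e) j = head_aux fuel cs j.
Proof.
  revert j. induction fuel as [|f IH]; intros j Hv Hj; cbn [head_aux]; [reflexivity|].
  unfold f_at. rewrite app_nth1 by lia.
  pose proof (Hv (j-2)%nat ltac:(lia)) as Hok.
  destruct (nth (j-2) cs (CV 0)) as [i|i|i]; simpl in Hok; try reflexivity.
  apply IH; [exact Hv| lia].
Qed.

Lemma head_aux_range fuel cs j : valid cs -> (2 <= j <= length cs + 1)%nat -> (j <= fuel)%nat ->
  (1 <= head_aux fuel cs j <= j - 1)%nat.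
Proof.
  revert j. induction fuel as [|f IH]; intros j Hv Hj Hf; [lia|]. cbn [head_aux].
  unfold f_at.
  pose proof (Hv (j-2)%nat ltac:(lia)) as Hok.
  destruct (nth (j-2) cs (CV 0)) as [i|i|i]; simpl in Hok; try lia.
  pose proof (IH i Hv ltac:(lia) ltac:(lia)). lia.
Qed.

Lemma DeltaG_app cs e t : valid cs -> (t <= length cs + 1)%nat -> DeltaG (cs ++ e) t = DeltaG cs t.
Proof.
  intros Hv Ht. unfold DeltaG. f_equal. apply map_ext. intro v. unfold degG. f_equal.
  apply map_ext_in. intros j Hj. apply in_seq in Hj. unfold Defs.head.
  rewrite head_aux_app; auto; lia.
Qed.

Lemma nsum_map_add {A} (f g : A -> nat) l :
  nsum (map (fun x => f x + g x)%nat l) = (nsum (map f l) + nsum (map g l))%nat.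
Proof. induction l; simpl; [reflexivity|]. rewrite IHl. lia. Qed.

Lemma nsum_map_mul {A} c (f : A -> nat) l :
  nsum (map (fun x => c * f x)%nat l) = (c * nsum (map f l))%nat.
Proof. induction l; simpl; [lia|]. rewrite IHl. lia. Qed.

Lemma nsum_swap {A B} (F : A -> B -> nat) la lb :
  nsum (map (fun a => nsum (map (fun b => F a b) lb)) la) =
  nsum (map (fun b => nsum (map (fun a => F a b) la)) lb).
Proof.
  induction la as [|a la IH]; simpl.
  - induction lb; simpl; lia.
  - rewrite IH. rewrite <- nsum_map_add. reflexivity.
Qed.

Lemma nsum_le {A} (f g : A -> nat) l : (forall x, In x l -> f x <= g x)%nat ->
  (nsum (map f l) <= nsum (map g l))%nat.
Proof.
  induction l; simpl; intros H; [lia|].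
  pose proof (H a (or_introl eq_refl)). pose proof (IHl (fun x Hx => H x (or_intror Hx))). lia.
Qed.

Lemma nmax_le l c : (forall x, In x l -> x <= c)%nat -> (nmax l <= c)%nat.
Proof.
  induction l; simpl; intros H; [lia|].
  pose proof (H a (or_introl eq_refl)). pose proof (IHl (fun x Hx => H x (or_intror Hx))). lia.
Qed.

Lemma nmax_ge l x : In x l -> (x <= nmax l)%nat.
Proof. induction l; simpl; intros H; [easy|]. destruct H as [->|H]; [lia|]. specialize (IHl H); lia. Qed.

Lemma sum_delta0 (f : nat -> nat) l x : ~ In x l ->
  nsum (map (fun v => f v * Defs.ind (Nat.eqb x v)) l)%nat = 0%nat.
Proof.
  induction l as [|a l IH]; simpl; intros H; [reflexivity|].
  destruct (Nat.eqb_spec x a); [exfalso; apply H; auto|]. simpl. rewrite IH; [lia|]. tauto.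
Qed.

Lemma sum_delta (f : nat -> nat) l x : NoDup l -> In x l ->
  nsum (map (fun v => f v * Defs.ind (Nat.eqb x v)) l)%nat = f x.
Proof.
  induction l as [|a l IH]; simpl; intros Hn H; [easy|].
  inversion Hn; subst.
  destruct (Nat.eqb_spec x a).
  - subst. simpl. rewrite sum_delta0 by auto. lia.
  - simpl. rewrite IH; auto. lia. destruct H; [congruence|auto].
Qed.

Lemma nsum_ind_filter {A} (P : A -> bool) l :
  nsum (map (fun x => Defs.ind (P x)) l) = length (filter P l).
Proof. induction l; simpl; [reflexivity|]. destruct (P a); simpl; lia. Qed.

Lemma count_block m t b : (0 < m)%nat ->
  (nsum (map (fun v => Defs.ind (Nat.eqb (block m v) b)) (seq 1 t)) <= m)%nat.
Proof.
  intros Hm. rewrite nsum_ind_filter.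
  eapply Nat.le_trans; [|apply Nat.eq_le_incl, (length_seq m ((b-1)*m+1))].
  apply NoDup_incl_length. apply NoDup_filter, seq_NoDup.
  intros x Hx. apply filter_In in Hx. destruct Hx as [Hx Hb].
  apply in_seq in Hx. apply Nat.eqb_eq in Hb. apply in_seq. unfold block in Hb.
  pose proof (Nat.div_mod_eq (x-1) m). pose proof (Nat.mod_upper_bound (x-1) m ltac:(lia)).
  set (q := ((x-1)/m)%nat) in *. set (r := ((x-1) mod m)%nat) in *.
  subst b. replace (q + 1 - 1)%nat with q by lia. nia.
Qed.

Lemma degH_le cs m t b : (0 < m)%nat -> valid cs -> (t <= length cs + 1)%nat ->
  (degH cs m t b <= m * DeltaG cs t)%nat.
Proof.
  intros Hm Hv Ht.
  set (g := fun x => Defs.ind (Nat.eqb (block m x) b)).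
  assert (Hg: forall x, (1 <= x <= t)%nat ->
     g x = nsum (map (fun v => g v * Defs.ind (Nat.eqb x v)) (seq 1 t))%nat).
  { intros x Hx. symmetry. apply sum_delta. apply seq_NoDup. apply in_seq. lia. }
  unfold degH.
  transitivity (nsum (map (fun j => nsum (map (fun v => g v * (Defs.ind (Nat.eqb j v) +
      Defs.ind (Nat.eqb (Defs.head cs j) v))) (seq 1 t))) (seq 2 (t-1))))%nat.
  { apply Nat.eq_le_incl. f_equal. apply map_ext_in. intros j Hj. apply in_seq in Hj.
    change (g j + g (Defs.head cs j) = nsum (map (fun v => g v * (Defs.ind (Nat.eqb j v) +
      Defs.ind (Nat.eqb (Defs.head cs j) v))) (seq 1 t)))%nat.
    pose proof (head_aux_range j cs j Hv ltac:(lia) ltac:(lia)).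
    rewrite (Hg j) by lia. rewrite (Hg (Defs.head cs j)) by (unfold Defs.head; lia).
    rewrite <- nsum_map_add. f_equal. apply map_ext. intros; lia. }
  rewrite nsum_swap.
  transitivity (nsum (map (fun v => DeltaG cs t * g v) (seq 1 t)))%nat.
  { apply nsum_le. intros v Hvin.
    rewrite nsum_map_mul. rewrite (Nat.mul_comm (DeltaG cs t)). apply Nat.mul_le_mono_l.
    change (degG cs t v <= DeltaG cs t)%nat. unfold DeltaG. apply nmax_ge. apply in_map. exact Hvin. }
  rewrite nsum_map_mul. rewrite Nat.mul_comm. apply Nat.mul_le_mono_r.
  apply count_block; auto.
Qed.

Lemma DeltaH_le cs m t : (0 < m)%nat -> valid cs -> (t <= length cs + 1)%nat ->
  (DeltaH cs m t <= m * DeltaG cs t)%nat.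
Proof.
  intros. unfold DeltaH. apply nmax_le. intros x Hx. apply in_map_iff in Hx.
  destruct Hx as [b [<- _]]. apply degH_le; auto.
Qed.

Lemma rsum_app l1 l2 : rsum (l1 ++ l2) = rsum l1 + rsum l2.
Proof. induction l1; simpl; [ring|]. rewrite IHl1; ring. Qed.

Lemma rsum_map_add {A} (f g : A -> R) l :
  rsum (map (fun x => f x + g x) l) = rsum (map f l) + rsum (map g l).
Proof. induction l; simpl; [ring|]. rewrite IHl; ring. Qed.

Lemma rsum_map_scal {A} c (f : A -> R) l :
  rsum (map (fun x => c * f x) l) = c * rsum (map f l).
Proof. induction l; simpl; [ring|]. rewrite IHl; ring. Qed.

Lemma rsum_map_mulr {A} c (f : A -> R) l :
  rsum (map (fun x => f x * c) l) = c * rsum (map f l).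
Proof. induction l; simpl; [ring|]. rewrite IHl; ring. Qed.

Lemma rsum_map_zero {A} (f : A -> R) l : (forall x, f x = 0) -> rsum (map f l) = 0.
Proof. intros H; induction l; simpl; [ring|]. rewrite IHl, H; ring. Qed.

Lemma rsum_le_in {A} (f g : A -> R) l : (forall x, In x l -> f x <= g x) ->
  rsum (map f l) <= rsum (map g l).
Proof.
  induction l; simpl; intros H; [lra|].
  pose proof (H a (or_introl eq_refl)). pose proof (IHl (fun x Hx => H x (or_intror Hx))). lra.
Qed.

Lemma rsum_snd_const {A} (h : nat -> A) (a : R) l :
  rsum (map snd (map (fun i => (h i, a)) l)) = INR (length l) * a.
Proof. induction l; simpl length; [simpl; ring|]. cbn [map rsum fold_right snd]. unfold rsum in *. rewrite IHl. rewrite S_INR. ring. Qed.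

Section Ex.
Variable beta : R.
Hypothesis hb : 0 < beta.

Lemma D_pos n : 0 < (2 + beta) * INR (S n) - 2.
Proof. rewrite S_INR. pose proof (pos_INR n). nra. Qed.

Lemma opt_valid pre cp : valid pre -> In cp (options beta (S (length pre))) ->
  valid (pre ++ [fst cp]).
Proof.
  intros Hv Hin. apply valid_snoc; auto. unfold options in Hin.
  repeat rewrite in_app_iff in Hin.
  destruct Hin as [H1|[H1|H1]]; apply in_map_iff in H1; destruct H1 as [i [<- Hi]];
    apply in_seq in Hi; simpl; lia.
Qed.

Lemma opt_nonneg n cp : In cp (options beta (S n)) -> 0 <= snd cp.
Proof.
  intros Hin. pose proof (D_pos n). unfold options in Hin.
  repeat rewrite in_app_iff in Hin.
  destruct Hin as [H1|[H1|H1]]; apply in_map_iff in H1; destruct H1 as [i [<- Hi]]; cbn [snd];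
    unfold Rdiv; apply Rmult_le_pos; try lra; left; apply Rinv_0_lt_compat; lra.
Qed.

Lemma opt_mass n : rsum (map snd (options beta (S n))) = 1.
Proof.
  pose proof (D_pos n). unfold options. rewrite !map_app, !rsum_app, !rsum_snd_const, !length_seq.
  replace (S n - 1)%nat with n by lia. rewrite S_INR in *. field. lra.
Qed.

Notation E := (expect_aux beta).

Lemma E_split a b pre F : E (a + b) pre F = E a pre (fun cs => E b cs F).
Proof.
  revert pre; induction a; intros pre; cbn [expect_aux Nat.add]; [reflexivity|]. f_equal. apply map_ext.
  intros cp. rewrite IHa. reflexivity.
Qed.

Lemma E_add b pre F G : E b pre (fun cs => F cs + G cs) = E b pre F + E b pre G.
Proof.
  revert pre; induction b; intros pre; cbn [expect_aux Nat.add]; [reflexivity|].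
  rewrite <- rsum_map_add. f_equal. apply map_ext. intros cp. rewrite IHb. ring.
Qed.

Lemma E_scal b pre c F : E b pre (fun cs => c * F cs) = c * E b pre F.
Proof.
  revert pre; induction b; intros pre; cbn [expect_aux Nat.add]; [reflexivity|].
  rewrite <- rsum_map_scal. f_equal. apply map_ext. intros cp. rewrite IHb. ring.
Qed.

Lemma E_zero b pre : E b pre (fun _ => 0) = 0.
Proof.
  revert pre; induction b; intros pre; cbn [expect_aux Nat.add]; [reflexivity|].
  apply rsum_map_zero. intros cp. rewrite IHb. ring.
Qed.

Lemma E_sum {A} b pre (F : A -> list choice -> R) l :
  E b pre (fun cs => rsum (map (fun i => F i cs) l)) = rsum (map (fun i => E b pre (F i)) l).
Proof.
  induction l as [|a l IH]; simpl.
  - apply E_zero.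
  - rewrite <- IH. apply (E_add b pre (F a) (fun cs => rsum (map (fun i => F i cs) l))).
Qed.

Lemma E_mono b pre F G : valid pre ->
  (forall cs, valid cs -> length cs = (length pre + b)%nat -> F cs <= G cs) ->
  E b pre F <= E b pre G.
Proof.
  revert pre; induction b; intros pre Hv H; cbn [expect_aux].
  - apply H; auto; lia.
  - apply rsum_le_in. intros cp Hin. apply Rmult_le_compat_l; [eapply opt_nonneg; eauto|].
    apply IHb; [eapply opt_valid; eauto|]. intros cs Hcs Hl. apply H; auto.
    rewrite Hl, length_app; simpl; lia.
Qed.

Lemma E_const b pre F L : valid pre -> (L <= length pre)%nat ->
  (forall cs c, valid cs -> (L <= length cs)%nat -> F (cs ++ [c]) = F cs) ->
  E b pre F = F pre.
Proof.
  revert pre; induction b; intros pre Hv HL Hst; cbn [expect_aux]; [reflexivity|].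
  transitivity (rsum (map (fun cp => snd cp * F pre) (options beta (S (length pre))))).
  - f_equal. apply map_ext_in. intros cp Hin. rewrite IHb; auto.
    + rewrite Hst; auto.
    + eapply opt_valid; eauto.
    + rewrite length_app; simpl; lia.
  - rewrite rsum_map_mulr, opt_mass. ring.
Qed.

Lemma marg T t G : (1 <= t <= T)%nat ->
  (forall cs c, valid cs -> (t - 1 <= length cs)%nat -> G (cs ++ [c]) = G cs) ->
  expectG beta T G = expectG beta t G.
Proof.
  intros Ht Hst. unfold expectG.
  replace (T-1)%nat with ((t-1) + (T-t))%nat by lia. rewrite E_split.
  apply Rle_antisym; apply E_mono; try apply valid_nil; intros cs Hv Hl; simpl in Hl;
    rewrite (E_const _ _ _ (t-1)%nat); auto; try lia; apply Rle_refl.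
Qed.

End Ex.

Lemma rprod_nonneg l : Forall (fun y => 0 <= y) l -> 0 <= rprod l.
Proof. induction 1; simpl; [lra|]. apply Rmult_le_pos; auto. Qed.

Lemma rprod_le {A} (f g : A -> R) l : (forall x, In x l -> 0 <= f x <= g x) ->
  rprod (map f l) <= rprod (map g l).
Proof.
  induction l; simpl; intros H; [lra|].
  assert (H' : forall x, In x l -> 0 <= f x <= g x) by auto.
  pose proof (H a (or_introl eq_refl)).
  apply Rmult_le_compat; try lra; auto.
  apply rprod_nonneg. apply Forall_forall. intros y Hy. apply in_map_iff in Hy.
  destruct Hy as [x [<- Hx]]. apply H'; auto.
Qed.

Lemma rprod_scal {A} c (f : A -> R) l :
  rprod (map (fun x => c * f x) l) = c ^ length l * rprod (map f l).
Proof. induction l; simpl; [ring|]. rewrite IHl; ring. Qed.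

Definition rmx (l : list R) := fold_right Rmax 0 l.

Lemma rmx_nonneg l : 0 <= rmx l.
Proof. induction l; simpl; [lra|]. eapply Rle_trans; [apply IHl| apply Rmax_r]. Qed.

Lemma rprod_le_max l : Forall (fun y => 0 <= y) l -> rprod l <= rmx l ^ length l.
Proof.
  induction 1; simpl; [lra|].
  apply Rmult_le_compat; auto.
  - apply rprod_nonneg; auto.
  - apply Rmax_l.
  - eapply Rle_trans; [apply IHForall|]. apply pow_incr. split; [apply rmx_nonneg|apply Rmax_r].
Qed.

Lemma max_pow_le l n : (1 <= n)%nat -> Forall (fun y => 0 <= y) l ->
  rmx l ^ n <= rsum (map (fun y => y ^ n) l).
Proof.
  intros Hn. induction 1; simpl.
  - rewrite pow_i by lia. lra.
  - assert (0 <= rsum (map (fun y => y ^ n) l)).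
    { eapply Rle_trans; [|apply IHForall]. apply pow_le, rmx_nonneg. }
    assert (0 <= x ^ n) by (apply pow_le; auto).
    unfold Rmax. destruct (Rle_dec x (rmx l)).
    + fold (rmx l). lra.
    + lra.
Qed.

Theorem corollary7 (beta : R) (hbeta : 0 < beta)
  (Mori : forall k : nat, (0 < k)%nat -> exists Mk : R, forall n : nat, (1 <= n)%nat ->
      expectG beta n (fun cs =>
        ((INR (DeltaG cs n) + beta) / Rpower (INR n) (1 / (2 + beta))) ^ k) <= Mk) :
  forall k m : nat, (0 < k)%nat -> (0 < m)%nat ->
  exists M : R, forall is : list nat,
    length is = k -> Forall (fun i => (0 < i)%nat) is ->
    expectG beta (m * nmax is)%nat (fun cs =>
      rprod (map (fun i => INR (DeltaH cs m (m * i)) /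
                           Rpower (INR (m * i)) (1 / (2 + beta))) is)) <= M.
Proof.
  intros k m Hk Hm. destruct (Mori k Hk) as [Mk HMk].
  exists (INR m ^ k * (INR k * Mk)). intros is Hlen Hpos.
  set (T := (m * nmax is)%nat).
  set (Y := fun t cs => (INR (DeltaG cs t) + beta) / Rpower (INR t) (1 / (2 + beta))).
  assert (HiT : forall i, In i is -> (1 <= m * i <= T)%nat).
  { intros i Hi. rewrite Forall_forall in Hpos. specialize (Hpos i Hi).
    pose proof (nmax_ge is i Hi). unfold T. split; [nia|]. apply Nat.mul_le_mono_l; auto. }
  assert (HT : (1 <= T)%nat).
  { destruct is as [|i0 is']; [simpl in Hlen; lia|]. assert (In i0 (i0 :: is')) by (simpl; auto). specialize (HiT i0 H). lia. }
  assert (Hp : forall t, (1 <= t)%nat -> 0 < Rpower (INR t) (1 / (2 + beta))).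
  { intros. unfold Rpower. apply exp_pos. }
  assert (HY : forall t cs, (1 <= t)%nat -> 0 <= Y t cs).
  { intros t cs Ht. unfold Y, Rdiv. apply Rmult_le_pos.
    pose proof (pos_INR (DeltaG cs t)); lra. left; apply Rinv_0_lt_compat; auto. }
  eapply Rle_trans with
    (r2 := expectG beta T (fun cs => INR m ^ k * rsum (map (fun i => Y (m * i)%nat cs ^ k) is))).
  { unfold expectG. apply E_mono; auto; [apply valid_nil|]. intros cs Hv Hl. simpl in Hl.
    eapply Rle_trans.
    - apply (rprod_le _ (fun i => INR m * Y (m * i)%nat cs)).
      intros i Hi. specialize (HiT i Hi). pose proof (Hp _ (proj1 HiT)).
      pose proof (DeltaH_le cs m (m * i) Hm Hv ltac:(lia)).
      apply le_INR in H0. rewrite mult_INR in H0.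
      split.
      + unfold Rdiv. apply Rmult_le_pos; [apply pos_INR|left; apply Rinv_0_lt_compat; auto].
      + unfold Y, Rdiv. rewrite <- Rmult_assoc. apply Rmult_le_compat_r.
        * left; apply Rinv_0_lt_compat; auto.
        * pose proof (pos_INR m). nra.
    - rewrite rprod_scal, Hlen. apply Rmult_le_compat_l; [apply pow_le, pos_INR|].
      eapply Rle_trans; [apply rprod_le_max|].
      + apply Forall_forall. intros y Hy. apply in_map_iff in Hy. destruct Hy as [i [<- Hi]].
        apply HY. apply (HiT i Hi).
      + rewrite length_map, Hlen. eapply Rle_trans; [apply max_pow_le; auto|].
        * apply Forall_forall. intros y Hy. apply in_map_iff in Hy. destruct Hy as [i [<- Hi]].
          apply HY. apply (HiT i Hi).
        * rewrite map_map. apply Rle_refl. }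
  unfold expectG. rewrite E_scal. rewrite E_sum.
  apply Rmult_le_compat_l; [apply pow_le, pos_INR|].
  replace (INR k) with (INR (length is)) by (rewrite Hlen; reflexivity).
  assert (Hgen : forall l, (forall j, In j l -> (1 <= m * j <= T)%nat) ->
    rsum (map (fun i => expect_aux beta (T - 1) [] (fun cs => Y (m * i)%nat cs ^ k)) l)
      <= INR (length l) * Mk).
  { induction l as [|i l IH]; intros Hl; cbn [length map rsum fold_right]; [simpl; lra|].
    rewrite S_INR, Rmult_plus_distr_r, Rmult_1_l, (Rplus_comm (INR (length l) * Mk)).
    apply Rplus_le_compat.
    - assert (Hi : (1 <= m * i <= T)%nat) by (apply Hl; simpl; auto).
      change (expectG beta T (fun cs => Y (m * i)%nat cs ^ k) <= Mk).
      rewrite (marg beta hbeta T (m * i)%nat); auto.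
      + apply HMk. lia.
      + intros cs c Hv Hl'. unfold Y. rewrite DeltaG_app; auto. lia.
    - apply IH. intros j Hj. apply Hl; simpl; auto. }
  apply Hgen. exact HiT.
Qed.
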